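(* Consider stochastic momentum gradient descent on a 2-layer diagonal linear network as described in the context. Assume that the iterates $(u_k,v_k)$ converge to $(u_\infty,v_\infty)$, let $\theta^{\mathrm{SMGD}}=u_\infty\odot v_\infty$, assume that $\Delta_\infty=|u_\infty^2-v_\infty^2|$ has nonzero coordinates, and that no coordinate of $w_{\pm,k}$ is ever exactly zero. Then $\theta^{\mathrm{SMGD}}$ interpolates the dataset and $$\theta^{\mathrm{SMGD}}=\arg\min_{\theta^\star\in\mathcal{S}}D_{\psi_{\Delta_\infty}}(\theta^\star,\tilde\theta_0),$$ where $\Delta_\infty=\Delta_0\odot\exp\big(-(S_++S_-)\big)$ and $\tilde\theta_0=\frac14\big(w_{+,0}^2\odot\exp(-2S_+)-w_{-,0}^2\odot\exp(-2S_-)\big)$.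
   Context: Data $x_1,\dots,x_n\in\mathbb{R}^d$, $y\in\mathbb{R}^n$, interpolators $\mathcal{S}=\{\theta:\langle\theta,x_i\rangle=y_i\ \forall i\}$. For a batch $\mathcal B\subset[n]$ of size $B$, $L_{\mathcal B}(\theta)=\frac{1}{2B}\sum_{i\in\mathcal B}(y_i-\langle x_i,\theta\rangle)^2$. Vector operations are coordinate-wise. Stochastic momentum gradient descent with $\gamma>0$, $\beta\in[0,1)$ and batches $\mathcal B_k\subset[n]$ of size $B\in[n]$ sampled with or without replacement: $u_{k+1}=u_k-\gamma\nabla L_{\mathcal B_k}(\theta_k)\odot v_k+\beta(u_k-u_{k-1})$, $v_{k+1}=v_k-\gamma\nabla L_{\mathcal B_k}(\theta_k)\odot u_k+\beta(v_k-v_{k-1})$, $\theta_k=u_k\odot v_k$, with $u_1=u_0$, $v_1=v_0$. $w_{\pm,k}=u_k\pm v_k$, $\Delta_k=|u_k^2-v_k^2|$. $S_\pm=\frac{1}{1-\beta}\sum_{k=1}^\infty[r(w_{\pm,k+1}/w_{\pm,k})+\beta r(w_{\pm,k}/w_{\pm,k+1})]$ with $r(z)=(z-1)-\ln|z|$. Hyperbolic entropy: for $\Delta\in(0,\infty)^d$, $\psi_\Delta(\theta)=\frac14\sum_{i=1}^d\big(2\theta_i\mathrm{arcsinh}(2\theta_i/\Delta_i)-\sqrt{4\theta_i^2+\Delta_i^2}+\Delta_i\big)$; Bregman divergence $D_\Phi(\theta_1,\theta_2)=\Phi(\theta_1)-\Phi(\theta_2)-\langle\nabla\Phi(\theta_2),\theta_1-\theta_2\rangle$.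 *)

(* Defs.v *)
From HB Require Import structures.
From mathcomp Require Import all_boot all_order all_algebra.
From mathcomp Require Import all_classical all_reals all_analysis.
Set Implicit Arguments. Unset Strict Implicit. Unset Printing Implicit Defensive.
Import Order.TTheory GRing.Theory Num.Theory.
Local Open Scope ring_scope.

Definition dotv (R : realType) (d : nat) (a b : 'I_d -> R) : R :=
  \sum_(j < d) a j * b j.

Definition interpolators (R : realType) (n d : nat)
  (x : 'I_n -> 'I_d -> R) (y : 'I_n -> R) : set ('I_d -> R) :=
  [set th | forall i : 'I_n, dotv th (x i) = y i].

(* Batch loss L_B(theta) = 1/(2B) sum_{i in batch} (y_i - <x_i,theta>)^2.
   A batch is a map 'I_B -> 'I_n (entries may repeat: sampling with
   replacement; injective maps: sampling without replacement). *)
Definition batch_loss (R : realType) (n d B : nat)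
  (x : 'I_n -> 'I_d -> R) (y : 'I_n -> R) (b : 'I_B -> 'I_n)
  (th : 'I_d -> R) : R :=
  (2 * B%:R)^-1 * \sum_(m < B) (y (b m) - dotv (x (b m)) th) ^+ 2.

Definition grad (R : realType) (d : nat) (Phi : ('I_d -> R) -> R)
  (th : 'I_d -> R) : 'I_d -> R :=
  fun j => derive1 (fun t : R => Phi (fun i => if i == j then t else th i)) (th j).

Definition bregman (R : realType) (d : nat) (Phi : ('I_d -> R) -> R)
  (th1 th2 : 'I_d -> R) : R :=
  Phi th1 - Phi th2 - dotv (grad Phi th2) (fun j => th1 j - th2 j).

Definition arcsinh (R : realType) (z : R) : R := ln (z + Num.sqrt (z ^+ 2 + 1)).

Definition hyp_entropy (R : realType) (d : nat) (Delta : 'I_d -> R)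
  (th : 'I_d -> R) : R :=
  4^-1 * \sum_(i < d) (2 * th i * arcsinh (2 * th i / Delta i)
                        - Num.sqrt (4 * th i ^+ 2 + Delta i ^+ 2) + Delta i).

Definition rfun (R : realType) (z : R) : R := (z - 1) - ln `|z|.

(* Summand of S_pm (before the factor 1/(1-beta)) for a scalar sequence w:
   r(w_{k+1}/w_k) + beta r(w_k/w_{k+1}). *)
Definition S_term (R : realType) (beta : R) (w : nat -> R) (k : nat) : R :=
  rfun (w k.+1 / w k) + beta * rfun (w k / w k.+1).

(* Main.v *)
Require Import Defs.
From HB Require Import structures.
From mathcomp Require Import all_boot all_order all_algebra.
From mathcomp Require Import all_classical all_reals all_analysis.
From mathcomp Require Import lra ring.
Import Order.TTheory GRing.Theory Num.Theory.
Import numFieldNormedType.Exports.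
Local Open Scope classical_set_scope.
Local Open Scope ring_scope.
Set Implicit Arguments. Unset Strict Implicit.
Ltac clrF := repeat (match goal with |- Filter _ -> _ => intros _ end).

Section S.
Variable R : realType.

Lemma sqrt_pos (z : R) : 0 < Num.sqrt (z ^+ 2 + 1).
Proof. by rewrite sqrtr_gt0 ltr_wpDl ?sqr_ge0. Qed.

Lemma abs_lt_sqrt (z : R) : `|z| < Num.sqrt (z ^+ 2 + 1).
Proof.
rewrite -sqrtr_sqr ltr_sqrt ?ltrDl //.
by rewrite ltr_wpDl ?sqr_ge0.
Qed.

Lemma arcsinh_arg_pos (z : R) : 0 < z + Num.sqrt (z ^+ 2 + 1).
Proof. have := abs_lt_sqrt z; have := ler_norm (- z); rewrite normrN; lra. Qed.

Lemma is_derive_arcsinh (z : R) :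
  is_derive z 1 (@arcsinh R) (Num.sqrt (z ^+ 2 + 1))^-1.
Proof.
have hC := sqrt_pos z.
have hE := arcsinh_arg_pos z.
have h1 : is_derive z 1 (fun t : R => t ^+ 2 + 1) (2 * z).
  apply: is_derive_eq; rewrite addr0 -scalerDl scaler1 -mulr2n mulr_natl //=.
have h2 : is_derive z 1 (Num.sqrt \o (fun t : R => t ^+ 2 + 1))
     ((2 * Num.sqrt (z ^+ 2 + 1))^-1 * (2 * z)).
  apply: is_derive1_comp; apply: is_derive1_sqrt; by rewrite ltr_wpDl ?sqr_ge0.

have h3 : is_derive z 1 (fun t : R => t + Num.sqrt (t ^+ 2 + 1))
     (1 + (2 * Num.sqrt (z ^+ 2 + 1))^-1 * (2 * z)).
  by apply: is_derive_eq.
have -> : @arcsinh R = (@ln R) \o (fun t : R => t + Num.sqrt (t ^+ 2 + 1)) by [].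
apply: is_derive_eq.
  apply: is_derive1_comp; exact: is_derive1_ln.
set C := Num.sqrt (z ^+ 2 + 1).
have hC0 : C != 0 by rewrite gt_eqF.
have hE0 : z + C != 0 by rewrite gt_eqF.
rewrite /=; field.
by rewrite hE0 hC0.
Qed.

Definition hterm (D t : R) : R :=
  2 * t * arcsinh (2 * t / D) - Num.sqrt (4 * t ^+ 2 + D ^+ 2) + D.

Lemma sqrt_hterm (D t : R) : 0 < D ->
  Num.sqrt (4 * t ^+ 2 + D ^+ 2) = D * Num.sqrt ((2 * t / D) ^+ 2 + 1).
Proof.
move=> D0.
have -> : D * Num.sqrt ((2 * t / D) ^+ 2 + 1) = Num.sqrt (D ^+ 2 * ((2 * t / D) ^+ 2 + 1)).
  by rewrite sqrtrM ?sqr_ge0 // sqrtr_sqr gtr0_norm.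
congr Num.sqrt; field; by rewrite gt_eqF.
Qed.

Lemma is_derive_hterm (D t : R) : 0 < D ->
  is_derive t 1 (hterm D) (2 * arcsinh (2 * t / D)).
Proof.
move=> D0.
have hz : is_derive t 1 (fun s : R => 2 * s / D) (2 / D).
  by apply: is_derive_eq; rewrite /GRing.scale /=; field; rewrite gt_eqF.
have ha : is_derive t 1 (@arcsinh R \o (fun s : R => 2 * s / D))
   ((Num.sqrt ((2 * t / D) ^+ 2 + 1))^-1 * (2 / D)).
  apply: is_derive1_comp; exact: is_derive_arcsinh.
have hq : is_derive t 1 (fun s : R => 4 * s ^+ 2 + D ^+ 2) (8 * t).
  by apply: is_derive_eq; rewrite /GRing.scale /=; ring.
have hs : is_derive t 1 (Num.sqrt \o (fun s : R => 4 * s ^+ 2 + D ^+ 2))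
   ((2 * Num.sqrt (4 * t ^+ 2 + D ^+ 2))^-1 * (8 * t)).
  apply: is_derive1_comp; apply: is_derive1_sqrt.
  by rewrite ltr_pwDr ?exprn_gt0 // mulr_ge0 ?sqr_ge0.
have -> : hterm D = (fun s => 2 * s * (@arcsinh R \o (fun s : R => 2 * s / D)) s
   - (Num.sqrt \o (fun s : R => 4 * s ^+ 2 + D ^+ 2)) s + D) by [].
apply: is_derive_eq.
rewrite sqrt_hterm //= /GRing.scale /=.
have := sqrt_pos (2 * t / D).
set C := Num.sqrt _ => C0.
field; by rewrite !gt_eqF.
Qed.

Lemma grad_hyp (d : nat) (Delta th : 'I_d -> R) (j : 'I_d) : 0 < Delta j ->
  grad (hyp_entropy Delta) th j = 2^-1 * arcsinh (2 * th j / Delta j).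
Proof.
move=> D0; rewrite /grad.
set c := \sum_(i < d | i != j) hterm (Delta i) (th i).
have -> : (fun t => hyp_entropy Delta (fun i => if i == j then t else th i))
   = (fun t => 4^-1 * (hterm (Delta j) t + c)).
  apply/funext => t; rewrite /hyp_entropy (bigD1 j) //= eqxx; congr (_ * (_ + _)).
  by apply: eq_bigr => i /negbTE ->.
rewrite derive1E; apply: derive_val.
have h := @is_derive_hterm (Delta j) (th j) D0.
apply: is_derive_eq.
rewrite /GRing.scale /=; by field.
Qed.

Lemma dotv_upd (d : nat) (a th : 'I_d -> R) (j : 'I_d) (t : R) :
  dotv a (fun i => if i == j then t else th i) = dotv a th + a j * (t - th j).
Proof.
rewrite /dotv (bigD1 j) //= eqxx [in RHS](bigD1 j) //=.
have -> : \sum_(i < d | i != j) a i * (if i == j then t else th i)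
        = \sum_(i < d | i != j) a i * th i.
  by apply: eq_bigr => i /negbTE ->.
ring.
Qed.

Lemma grad_batch (n d B : nat) (x : 'I_n -> 'I_d -> R) (y : 'I_n -> R)
  (b : 'I_B -> 'I_n) (th : 'I_d -> R) (j : 'I_d) : (0 < B)%N ->
  grad (batch_loss x y b) th j =
  - (B%:R)^-1 * \sum_(m < B) (y (b m) - dotv (x (b m)) th) * x (b m) j.
Proof.
move=> B0; rewrite /grad.
set P := \sum_(m < B) (y (b m) - dotv (x (b m)) th) ^+ 2.
set Q := \sum_(m < B) (y (b m) - dotv (x (b m)) th) * x (b m) j.
set W := \sum_(m < B) x (b m) j ^+ 2.
have -> : (fun t => batch_loss x y b (fun i => if i == j then t else th i))
   = (fun t => (2 * B%:R)^-1 * (P - 2 * (t - th j) * Q + (t - th j) ^+ 2 * W)).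
  apply/funext => t; rewrite /batch_loss; congr (_ * _).
  rewrite /P /Q /W mulr_sumr mulr_sumr -sumrB -big_split /=.
  by apply: eq_bigr => m _; rewrite dotv_upd; ring.
rewrite derive1E; apply: derive_val.
apply: is_derive_eq.
rewrite /GRing.scale /= subrr.
have : (B%:R : R) != 0 by rewrite pnatr_eq0 -lt0n.
move=> hB; field; by rewrite hB.
Qed.

Lemma exp_arcsinh (z : R) : expR (arcsinh z) = z + Num.sqrt (z ^+ 2 + 1).
Proof. by rewrite /arcsinh lnK // posrE arcsinh_arg_pos. Qed.

Lemma exp_Narcsinh (z : R) : expR (- arcsinh z) = Num.sqrt (z ^+ 2 + 1) - z.
Proof.
rewrite expRN exp_arcsinh.
have hE := arcsinh_arg_pos z.
have hS : Num.sqrt (z ^+ 2 + 1) ^+ 2 = z ^+ 2 + 1.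
  by rewrite sqr_sqrtr // addr_ge0 ?sqr_ge0.
apply: (@mulfI _ (z + Num.sqrt (z ^+ 2 + 1))); first by rewrite gt_eqF.
rewrite mulfV ?gt_eqF //.
have -> : (z + Num.sqrt (z ^+ 2 + 1)) * (Num.sqrt (z ^+ 2 + 1) - z)
   = Num.sqrt (z ^+ 2 + 1) ^+ 2 - z ^+ 2 by ring.
by rewrite hS; ring.
Qed.

Lemma cosh_convex (s sg : R) : s != sg ->
  (sg - s) * (expR s - expR (- s)) < (expR sg + expR (- sg)) - (expR s + expR (- s)).
Proof.
move=> hne.
have ht : sg - s != 0 by rewrite subr_eq0 eq_sym.
have e1 := expR_gt1Dx ht.
have ht' : - (sg - s) != 0 by rewrite oppr_eq0.
have e2 := expR_gt1Dx ht'.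
have hY : expR sg = expR s * expR (sg - s) by rewrite -expRD; congr expR; ring.
have hY' : expR (- sg) = expR (- s) * expR (- (sg - s)).
  by rewrite -expRD; congr expR; ring.
rewrite hY hY'.
have X0 := expR_gt0 s; have X1 := expR_gt0 (- s).
set t := sg - s in e1 e2 *.
set E := expR t in e1 *; set E' := expR (- t) in e2 *.
set X := expR s in X0 *; set X' := expR (- s) in X1 *.
have h1 : X * (1 + t) < X * E by rewrite ltr_pM2l.
have h2 : X' * (1 + - t) < X' * E' by rewrite ltr_pM2l.
nra.
Qed.

Lemma hterm_strict (D a b : R) : 0 < D -> a != b ->
  0 < hterm D a - hterm D b - 2 * arcsinh (2 * b / D) * (a - b).
Proof.
move=> D0 hab.
rewrite /hterm !sqrt_hterm //.
set p := 2 * a / D; set q := 2 * b / D.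
have ha : a = D * p / 2 by rewrite /p; field; rewrite gt_eqF.
have hb : b = D * q / 2 by rewrite /q; field; rewrite gt_eqF.
have Xp := exp_arcsinh p; have Xp' := exp_Narcsinh p.
have Xq := exp_arcsinh q; have Xq' := exp_Narcsinh q.
set s := arcsinh p in Xp Xp' *; set sg := arcsinh q in Xq Xq' *.
set Cp := Num.sqrt (p ^+ 2 + 1) in Xp Xp' *.
set Cq := Num.sqrt (q ^+ 2 + 1) in Xq Xq' *.
have hs : s != sg.
  apply: contra hab => /eqP hss.
  have : p = q.
    have -> : p = (expR s - expR (- s)) / 2 by rewrite Xp Xp'; field.
    have -> : q = (expR sg - expR (- sg)) / 2 by rewrite Xq Xq'; field.
    by rewrite hss.
  by move=> hpq; rewrite ha hb hpq.
have key := @cosh_convex s sg hs.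
rewrite Xp Xp' Xq Xq' in key.
have -> : 2 * a * s - D * Cp + D - (2 * b * sg - D * Cq + D) - 2 * sg * (a - b)
   = D * ((Cq - Cp) - (sg - s) * p).
  by clearbody p q s sg Cp Cq; rewrite ha hb; field.
have hpos : 0 < (Cq - Cp) - (sg - s) * p by nra.
exact: mulr_gt0 D0 hpos.
Qed.

Lemma arcsinh_ratio (A B : R) : 0 < A -> 0 < B ->
  arcsinh (2 * (4^-1 * (A ^+ 2 - B ^+ 2)) / (A * B)) = ln A - ln B.
Proof.
move=> A0 B0.
have AB0 : 0 < A * B by exact: mulr_gt0.
have hz : (2 * (4^-1 * (A ^+ 2 - B ^+ 2)) / (A * B)) ^+ 2 + 1
   = ((A ^+ 2 + B ^+ 2) / (2 * (A * B))) ^+ 2.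
  by field; rewrite !gt_eqF.
have hS : Num.sqrt ((2 * (4^-1 * (A ^+ 2 - B ^+ 2)) / (A * B)) ^+ 2 + 1)
   = (A ^+ 2 + B ^+ 2) / (2 * (A * B)).
  rewrite hz sqrtr_sqr ger0_norm // divr_ge0 //.
    by rewrite addr_ge0 ?sqr_ge0.
  by rewrite mulr_ge0 // ltW.
rewrite /arcsinh hS.
have -> : 2 * (4^-1 * (A ^+ 2 - B ^+ 2)) / (A * B) + (A ^+ 2 + B ^+ 2) / (2 * (A * B))
   = A / B by field; rewrite !gt_eqF.
by rewrite ln_div // posrE.
Qed.
End S.

Section S2.
Variable R : realType.

Lemma cvg_sumI (d : nat) (f : 'I_d -> nat -> R) (l : 'I_d -> R) :
  (forall j, f j @ \oo --> l j) ->
  (fun k => \sum_(j < d) f j k) @ \oo --> \sum_(j < d) l j.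
Proof.
move=> h; apply: cvg_big => //.
exact: add_continuous.
Qed.

Lemma near_ex (P : nat -> Prop) :
  (\forall k \near \oo, P k) -> exists N, forall k, (N <= k)%N -> P k.
Proof. by case => N _ hN; exists N => k hk; apply: hN. Qed.

Lemma ln_abs_div (a b : R) : a != 0 -> b != 0 ->
  ln `|a / b| = ln `|a| - ln `|b|.
Proof.
move=> a0 b0; rewrite normrM normrV ?unitfE // lnM ?lnV //.
all: by rewrite ?posrE ?invr_gt0 normr_gt0.
Qed.

Lemma rfun_div (a b : R) : a != 0 -> b != 0 ->
  rfun (a / b) = a / b - 1 - (ln `|a| - ln `|b|).
Proof. by move=> a0 b0; rewrite /rfun ln_abs_div. Qed.

Lemma rfun_ge0 (z : R) : 0 < z -> 0 <= rfun z.
Proof.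
move=> z0; rewrite /rfun gtr0_norm //.
have := @le_ln1Dx R (z - 1); have -> : 1 + (z - 1) = z by ring.
move=> h; have := h ltac:(lra); lra.
Qed.

Lemma rfun1 : rfun (1 : R) = 0.
Proof. by rewrite /rfun normr1 ln1; ring. Qed.

Lemma cvg_lnabs (w : nat -> R) (l : R) : l != 0 -> w @ \oo --> l ->
  (fun k => ln `|w k|) @ \oo --> ln `|l|.
Proof.
move=> l0 hw.
have hn : (fun k => `|w k|) @ \oo --> `|l| by exact: cvg_norm.
apply: (@continuous_cvg _ _ _ _ _ (fun k => `|w k|) (@ln R) `|l|) => //.
by apply: continuous_ln; rewrite normr_gt0.
Qed.


Lemma telescopeS (beta : R) (w c : nat -> R) :
  (forall k, w k != 0) -> w 1%N = w 0%N ->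
  (forall k, (1 <= k)%N -> w k.+1 = w k - c k * w k + beta * (w k - w k.-1)) ->
  forall K, \sum_(1 <= k < K.+1) S_term beta w k =
    - \sum_(1 <= k < K.+1) c k - (1 - beta) * (ln `|w K.+1| - ln `|w 0%N|)
    - beta * (ln `|w K.+1| - ln `|w K|) + beta * rfun (w K / w K.+1).
Proof.
move=> w0 w10 hrec; elim => [|K IH].
  rewrite !big_geq // w10 divff // rfun1; ring.
rewrite [in RHS]big_nat_recr //= big_nat_recr //= IH.
have e1 : w K.+2 / w K.+1 = 1 - c K.+1 + beta * (1 - w K / w K.+1).
  by rewrite hrec //=; field.
rewrite /S_term (@rfun_div _ _ (w0 K.+2) (w0 K.+1)) (@rfun_div _ _ (w0 K) (w0 K.+1)) e1.
ring.
Qed.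

Lemma grad_dot (n d B : nat) (x : 'I_n -> 'I_d -> R) (y : 'I_n -> R)
  (b : 'I_B -> 'I_n) (th a c : 'I_d -> R) : (0 < B)%N ->
  \sum_(j < d) grad (batch_loss x y b) th j * (a j - c j) =
  - (B%:R)^-1 * \sum_(m < B) (y (b m) - dotv (x (b m)) th) *
       (dotv (x (b m)) a - dotv (x (b m)) c).
Proof.
move=> B0.
under eq_bigr => j _ do rewrite grad_batch // -mulrA mulr_suml.
rewrite -mulr_sumr; congr (_ * _).
rewrite exchange_big /=; apply: eq_bigr => m _.
rewrite /dotv -sumrB mulr_sumr; apply: eq_bigr => j _; ring.
Qed.
End S2.

Section S3.
Variable R : realType.

Lemma cvg_evt_eq (f g : nat -> R) (l : R) (N : nat) :
  (forall k, (N <= k)%N -> f k = g k) -> g @ \oo --> l -> f @ \oo --> l.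
Proof.
move=> h hg; apply: cvg_trans hg; apply: near_eq_cvg.
by exists N => // k /= hk; rewrite h.
Qed.

Lemma evt_mono_cvg (a b : nat -> R) (l : R) (N : nat) :
  (forall K, (N <= K)%N -> a K <= a K.+1) ->
  (forall K, (N <= K)%N -> b K <= b K.+1) ->
  (fun K => a K + b K) @ \oo --> l -> cvgn a.
Proof.
move=> ha hb hab.
have hmono : forall (c : nat -> R) n m, (forall K, (N <= K)%N -> c K <= c K.+1) ->
    (N <= n)%N -> (n <= m)%N -> c n <= c m.
  move=> c n m hc hn; elim: m => [|m IH]; first by rewrite leqn0 => /eqP ->.
  rewrite leq_eqVlt => /orP [/eqP -> //|]; rewrite ltnS => hm.
  exact: le_trans (IH hm) (hc _ (leq_trans hn hm)).
have hl1 : l < l + 1 by lra.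
have [N' hN'] := near_ex (cvgr_lt _ hab _ hl1).
set a' := fun n => a (n + N)%N.
have nd : nondecreasing_seq a'.
  apply/nondecreasing_seqP => n; rewrite /a' addSn; apply: ha; exact: leq_addl.
have ub : has_ubound (range a').
  exists (l + 1 - b N) => _ [n _ <-].
  have h1 : a' n <= a' (n + N')%N by apply: nd; exact: leq_addr.
  have h2 := hN' (n + N' + N)%N (leq_trans (leq_addl n N') (leq_addr _ _)).
  have h3 : b N <= b (n + N' + N)%N by apply: hmono => //; exact: leq_addl.
  rewrite /a' in h1 *; lra.
have := nondecreasing_is_cvgn nd ub.
move=> /cvg_ex [L hL]; apply/cvg_ex; exists L.
by rewrite -(cvg_shiftn N).
Qed.


Lemma lim_lnS (w : nat -> R) (l : R) : l != 0 -> w @ \oo --> l ->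
  (fun K => ln `|w K.+1|) @ \oo --> ln `|l|.
Proof.
move=> l0 hw; have := cvg_lnabs l0 hw.
by rewrite -cvg_shiftS.
Qed.

Lemma lim_ratioS (w : nat -> R) (l : R) : l != 0 -> w @ \oo --> l ->
  (fun K => w K / w K.+1) @ \oo --> (1 : R).
Proof.
move=> l0 hw.
have hS := hw; rewrite -cvg_shiftS in hS.
have := cvgM hw (cvgV l0 hS); by rewrite divff //; apply.
Qed.

Lemma lim_ratioS' (w : nat -> R) (l : R) : l != 0 -> w @ \oo --> l ->
  (fun K => w K.+1 / w K) @ \oo --> (1 : R).
Proof.
move=> l0 hw.
have hS := hw; rewrite -cvg_shiftS in hS.
have := cvgM hS (cvgV l0 hw); by rewrite divff //; apply.
Qed.

Lemma lim_rfun (w : nat -> R) (l : R) : l != 0 -> w @ \oo --> l ->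
  (fun K => rfun (w K / w K.+1)) @ \oo --> (0 : R).
Proof.
move=> l0 hw.
have hr := lim_ratioS l0 hw.
have h1 := cvg_lnabs (oner_neq0 R) hr.
have := cvgB (cvgB hr (cvg_cst (1 : R))) h1.
by rewrite normr1 ln1 subrr subr0; apply.
Qed.


Lemma S_term_ge0 (beta : R) (w : nat -> R) k : 0 <= beta ->
  w k != 0 -> w k.+1 != 0 -> 0 < w k.+1 / w k -> 0 <= S_term beta w k.
Proof.
move=> b0 h0 h1 hp; rewrite /S_term.
have hp' : 0 < w k / w k.+1 by rewrite -invf_div invr_gt0.
apply: addr_ge0; first exact: rfun_ge0.
by apply: mulr_ge0 => //; exact: rfun_ge0.
Qed.

Lemma evt_mono (beta : R) (w : nat -> R) (l : R) : 0 <= beta ->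
  (forall k, w k != 0) -> l != 0 -> w @ \oo --> l ->
  exists N, forall K, (N <= K)%N ->
    \sum_(1 <= k < K.+1) S_term beta w k <= \sum_(1 <= k < K.+2) S_term beta w k.
Proof.
move=> b0 w0 l0 hw.
have hr := lim_ratioS' l0 hw.
have [N hN] := near_ex (cvgr_gt _ hr _ (@ltr01 R)).
exists N => K hK; rewrite [X in _ <= X]big_nat_recr //= lerDl.
apply: S_term_ge0 => //; apply: hN; exact: leqW.
Qed.


Lemma coord_main (beta : R) (wp wm gs : nat -> R) (lp lm : R) :
  0 <= beta -> beta < 1 ->
  (forall k, wp k != 0) -> (forall k, wm k != 0) ->
  wp 1%N = wp 0%N -> wm 1%N = wm 0%N ->
  (forall k, (1 <= k)%N -> wp k.+1 = wp k - gs k * wp k + beta * (wp k - wp k.-1)) ->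
  (forall k, (1 <= k)%N -> wm k.+1 = wm k - (- gs k) * wm k + beta * (wm k - wm k.-1)) ->
  wp @ \oo --> lp -> wm @ \oo --> lm -> lp != 0 -> lm != 0 ->
  exists Sp Sm G : R,
    [/\ (fun K => (1 - beta)^-1 * \sum_(1 <= k < K) S_term beta wp k) @ \oo --> Sp,
        (fun K => (1 - beta)^-1 * \sum_(1 <= k < K) S_term beta wm k) @ \oo --> Sm,
        (fun K => \sum_(1 <= k < K.+1) gs k) @ \oo --> G,
        (1 - beta) * Sp = - G - (1 - beta) * (ln `|lp| - ln `|wp 0%N|) &
        (1 - beta) * Sm = G - (1 - beta) * (ln `|lm| - ln `|wm 0%N|)].
Proof.
move=> b0 b1 wp0 wm0 wp1 wm1 hrp hrm hp hm lp0 lm0.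
have tp := telescopeS wp0 wp1 hrp.
have tm := telescopeS wm0 wm1 hrm.
set TP := fun K => \sum_(1 <= k < K.+1) S_term beta wp k.
set TM := fun K => \sum_(1 <= k < K.+1) S_term beta wm k.
set GS := fun K => \sum_(1 <= k < K.+1) gs k.
have lpS := lim_lnS lp0 hp; have lmS := lim_lnS lm0 hm.
have lp' := cvg_lnabs lp0 hp; have lm' := cvg_lnabs lm0 hm.
have rp := lim_rfun lp0 hp; have rm := lim_rfun lm0 hm.
set Ep := fun K => - (1 - beta) * (ln `|wp K.+1| - ln `|wp 0%N|)
    - beta * (ln `|wp K.+1| - ln `|wp K|) + beta * rfun (wp K / wp K.+1).
set Em := fun K => - (1 - beta) * (ln `|wm K.+1| - ln `|wm 0%N|)
    - beta * (ln `|wm K.+1| - ln `|wm K|) + beta * rfun (wm K / wm K.+1).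
have hEp : Ep @ \oo --> - (1 - beta) * (ln `|lp| - ln `|wp 0%N|).
  have := cvgD (cvgB (cvgM (cvg_cst (- (1 - beta))) (cvgB lpS (cvg_cst (ln `|wp 0%N|))))
     (cvgM (cvg_cst beta) (cvgB lpS lp'))) (cvgM (cvg_cst beta) rp).
  by rewrite subrr !mulr0 subr0 addr0; clrF; apply.
have hEm : Em @ \oo --> - (1 - beta) * (ln `|lm| - ln `|wm 0%N|).
  have := cvgD (cvgB (cvgM (cvg_cst (- (1 - beta))) (cvgB lmS (cvg_cst (ln `|wm 0%N|))))
     (cvgM (cvg_cst beta) (cvgB lmS lm'))) (cvgM (cvg_cst beta) rm).
  by rewrite subrr !mulr0 subr0 addr0; clrF; apply.
have eTP : forall K, TP K = - GS K + Ep K.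
  by move=> K; rewrite /TP tp /GS /Ep; ring.
have eTM : forall K, TM K = GS K + Em K.
  by move=> K; rewrite /TM tm /GS /Em sumrN; ring.
have hsum : (fun K => TP K + TM K) @ \oo -->
   (- (1 - beta) * (ln `|lp| - ln `|wp 0%N|) + - (1 - beta) * (ln `|lm| - ln `|wm 0%N|)).
  have -> : (fun K => TP K + TM K) = (fun K => Ep K + Em K).
    by apply/funext => K; rewrite eTP eTM; ring.
  exact: cvgD hEp hEm.
have [Np hNp] := evt_mono b0 wp0 lp0 hp.
have [Nm hNm] := evt_mono b0 wm0 lm0 hm.
have hN1 : forall K, (maxn Np Nm <= K)%N -> TP K <= TP K.+1.
  by move=> K hK; apply: hNp; rewrite (leq_trans _ hK) // leq_maxl.
have hN2 : forall K, (maxn Np Nm <= K)%N -> TM K <= TM K.+1.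
  by move=> K hK; apply: hNm; rewrite (leq_trans _ hK) // leq_maxr.
have /cvg_ex [P hP] := evt_mono_cvg hN1 hN2 hsum.
set G := - P - (1 - beta) * (ln `|lp| - ln `|wp 0%N|).
have hG : GS @ \oo --> G.
  have -> : GS = (fun K => - TP K + Ep K).
    by apply/funext => K; rewrite eTP; ring.
  have := cvgD (cvgN hP) hEp; rewrite /G.
  have -> : - P + - (1 - beta) * (ln `|lp| - ln `|wp 0%N|)
     = - P - (1 - beta) * (ln `|lp| - ln `|wp 0%N|) by ring.
  by clrF; apply.
set M := G - (1 - beta) * (ln `|lm| - ln `|wm 0%N|).
have hM : TM @ \oo --> M.
  have -> : TM = (fun K => GS K + Em K) by apply/funext => K; rewrite eTM.
  have := cvgD hG hEm; rewrite /M.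
  have -> : G + - (1 - beta) * (ln `|lm| - ln `|wm 0%N|)
     = G - (1 - beta) * (ln `|lm| - ln `|wm 0%N|) by ring.
  by clrF; apply.
have b1' : 1 - beta != 0 by rewrite subr_eq0 eq_sym lt_eqF.
exists ((1 - beta)^-1 * P), ((1 - beta)^-1 * M), G; split.
- rewrite -cvg_shiftS; exact: cvgM (cvg_cst _) hP.
- rewrite -cvg_shiftS; exact: cvgM (cvg_cst _) hM.
- exact: hG.
- rewrite /G; field => //.
- rewrite /M; field => //.
Qed.

End S3.

Section S4.
Variable R : realType.

Lemma dotvC (d : nat) (a b : 'I_d -> R) : dotv a b = dotv b a.
Proof. by rewrite /dotv; apply: eq_bigr => j _; rewrite mulrC. Qed.

Lemma cvg_dotv (d : nat) (a : 'I_d -> R) (th : nat -> 'I_d -> R) (thinf : 'I_d -> R) :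
  (forall j, (fun k => th k j) @ \oo --> thinf j) ->
  (fun k => dotv a (th k)) @ \oo --> dotv a thinf.
Proof.
move=> h; rewrite /dotv.
apply: (@cvg_sumI R d (fun j k => a j * th k j)) => j.
have := cvgM (cvg_cst (a j)) (h j); clrF; apply.
Qed.

Lemma interp (n d B : nat) (x : 'I_n -> 'I_d -> R) (y : 'I_n -> R)
  (batch : nat -> 'I_B -> 'I_n) (th : nat -> 'I_d -> R) (thinf ths : 'I_d -> R) :
  (0 < B)%N -> interpolators x y ths ->
  (forall (i : 'I_n) (N : nat), exists k m, (N <= k)%N /\ batch k m = i) ->
  (forall j, (fun k => th k j) @ \oo --> thinf j) ->
  (forall j, (fun k => grad (batch_loss x y (batch k)) (th k) j) @ \oo --> 0) ->
  interpolators x y thinf.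
Proof.
move=> B0 hs hb hth hg.
set Q := fun k => \sum_(j < d) grad (batch_loss x y (batch k)) (th k) j * (th k j - ths j).
have hQ : Q @ \oo --> 0.
  have := @cvg_sumI R d (fun j k => grad (batch_loss x y (batch k)) (th k) j * (th k j - ths j))
     (fun j => 0 * (thinf j - ths j)).
  rewrite big1 => [h|j _]; last by rewrite mul0r.
  apply: h => j.
  have := cvgM (hg j) (cvgB (hth j) (cvg_cst (ths j))); clrF; apply.
have eQ : forall k, Q k = (B%:R)^-1 *
     \sum_(m < B) (y (batch k m) - dotv (x (batch k m)) (th k)) ^+ 2.
  move=> k; rewrite /Q grad_dot //.
  rewrite mulNr -mulrN -sumrN; congr (_ * _); apply: eq_bigr => m _.
  rewrite [dotv _ ths]dotvC hs; ring.
move=> i; rewrite dotvC.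
have [//|hne] := eqVneq (dotv (x i) thinf) (y i).
exfalso.
set rho := y i - dotv (x i) thinf.
have rho0 : 0 < rho ^+ 2 by rewrite exprn_even_gt0 //= subr_eq0 eq_sym.
have hr : (fun k => (y i - dotv (x i) (th k)) ^+ 2) @ \oo --> rho ^+ 2.
  have h1 : (fun k => y i - dotv (x i) (th k)) @ \oo --> rho.
    by apply: cvgB; [exact: cvg_cst | exact: cvg_dotv].
  have := cvgM h1 h1; clrF; rewrite -expr2; apply.
have Bp : 0 < (B%:R : R)^-1 by rewrite invr_gt0 ltr0n.
have hc1 : rho ^+ 2 / 2 < rho ^+ 2 by lra.
have hc2 : 0 < (B%:R)^-1 * (rho ^+ 2 / 2) by apply: mulr_gt0 => //; lra.
have [N1 hN1] := near_ex (cvgr_gt _ hr _ hc1).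
have [N2 hN2] := near_ex (cvgr_lt _ hQ _ hc2).
have [k [m [hk hm]]] := hb i (maxn N1 N2).
have h1 := hN1 k (leq_trans (leq_maxl _ _) hk).
have h2 := hN2 k (leq_trans (leq_maxr _ _) hk).
rewrite eQ in h2.
have h3 : (y i - dotv (x i) (th k)) ^+ 2 <=
    \sum_(m0 < B) (y (batch k m0) - dotv (x (batch k m0)) (th k)) ^+ 2.
  rewrite (bigD1 m) //= hm lerDl; apply: sumr_ge0 => m' _; exact: sqr_ge0.
have h4 : (B%:R)^-1 * (y i - dotv (x i) (th k)) ^+ 2 <=
    (B%:R)^-1 * \sum_(m0 < B) (y (batch k m0) - dotv (x (batch k m0)) (th k)) ^+ 2.
  by rewrite ler_pM2l.
have h5 : (B%:R)^-1 * (rho ^+ 2 / 2) < (B%:R)^-1 * (y i - dotv (x i) (th k)) ^+ 2.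
  by rewrite ltr_pM2l.
lra.
Qed.

End S4.

Section S5.
Variable R : realType.

Lemma Dinf_scalar (a b a0 b0 Sp Sm : R) : a != 0 -> b != 0 -> a0 != 0 -> b0 != 0 ->
  Sp + Sm = - (ln `|a| - ln `|a0| + (ln `|b| - ln `|b0|)) ->
  `|a| * `|b| = `|a0| * `|b0| * expR (- (Sp + Sm)).
Proof.
move=> a1 b1 a2 b2 ->; rewrite opprK !expRD expRN !lnK ?expRN ?lnK ?posrE ?normr_gt0 //.
field; by rewrite !normr_eq0 a2 b2.
Qed.

Lemma theta_form (a b : R) : a * b = 4^-1 * (`|a + b| ^+ 2 - `|a - b| ^+ 2).
Proof. by rewrite !real_normK ?num_real //; field. Qed.

Lemma th0_form (wp0 wm0 Sp Sm : R) :
  4^-1 * (wp0 ^+ 2 * expR (- (2 * Sp)) - wm0 ^+ 2 * expR (- (2 * Sm)))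
  = 4^-1 * ((`|wp0| * expR (- Sp)) ^+ 2 - (`|wm0| * expR (- Sm)) ^+ 2).
Proof.
rewrite !exprMn !real_normK ?num_real // !expr2 -!expRD.
by congr (_ * (_ * expR _ - _ * expR _)); ring.
Qed.

Lemma ln_AB (w S : R) : w != 0 -> ln (`|w| * expR (- S)) = ln `|w| - S.
Proof. by move=> w0; rewrite lnM ?expRK ?posrE ?normr_gt0 ?expR_gt0. Qed.

End S5.

Unset Implicit Arguments.

Theorem theorem2 (R : realType) (n d B : nat)
  (x : 'I_n -> 'I_d -> R) (y : 'I_n -> R) (gamma beta : R)
  (batch : nat -> 'I_B -> 'I_n) (u v : nat -> 'I_d -> R)
  (uinf vinf : 'I_d -> R) :
  0 < gamma -> 0 <= beta -> beta < 1 -> (0 < B)%N -> (B <= n)%N ->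
  (* the dataset admits interpolators *)
  (exists th_star : 'I_d -> R, interpolators x y th_star) ->
  (* every sample index is drawn in infinitely many batches *)
  (forall (i : 'I_n) (N : nat), exists k m, (N <= k)%N /\ batch k m = i) ->
  u 1%N = u 0%N -> v 1%N = v 0%N ->
  (forall k : nat, (1 <= k)%N -> forall j : 'I_d,
     u k.+1 j = u k j
       - gamma * grad (batch_loss x y (batch k)) (fun i => u k i * v k i) j * v k j
       + beta * (u k j - u k.-1 j)) ->
  (forall k : nat, (1 <= k)%N -> forall j : 'I_d,
     v k.+1 j = v k j
       - gamma * grad (batch_loss x y (batch k)) (fun i => u k i * v k i) j * u k j
       + beta * (v k j - v k.-1 j)) ->
  (forall j : 'I_d, (fun k => u k j) @ \oo --> uinf j) ->
  (forall j : 'I_d, (fun k => v k j) @ \oo --> vinf j) ->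
  (forall j : 'I_d, `|uinf j ^+ 2 - vinf j ^+ 2| != 0) ->
  (forall (k : nat) (j : 'I_d), u k j + v k j != 0 /\ u k j - v k j != 0) ->
  let theta := fun j => uinf j * vinf j in
  let Dinf := fun j => `|uinf j ^+ 2 - vinf j ^+ 2| in
  interpolators x y theta /\
  exists Sp Sm : 'I_d -> R,
    (forall j : 'I_d,
       (fun K : nat => (1 - beta)^-1 *
          \sum_(1 <= k < K) S_term beta (fun k => u k j + v k j) k) @ \oo --> Sp j) /\
    (forall j : 'I_d,
       (fun K : nat => (1 - beta)^-1 *
          \sum_(1 <= k < K) S_term beta (fun k => u k j - v k j) k) @ \oo --> Sm j) /\
    (forall j : 'I_d,
       Dinf j = `|u 0%N j ^+ 2 - v 0%N j ^+ 2| * expR (- (Sp j + Sm j))) /\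
    (let th0 := fun j => 4^-1 * ((u 0%N j + v 0%N j) ^+ 2 * expR (- (2 * Sp j))
                                - (u 0%N j - v 0%N j) ^+ 2 * expR (- (2 * Sm j))) in
     forall th : 'I_d -> R, interpolators x y th -> th <> theta ->
       bregman (hyp_entropy Dinf) theta th0 < bregman (hyp_entropy Dinf) th th0).
Proof.
move=> g0 b0 b1 B0 Bn [ths hs] hb hu1 hv1 hu hv hcu hcv hD hw theta Dinf.
set g := fun k j => grad (batch_loss x y (batch k)) (fun i => u k i * v k i) j.
have hth : forall j, (fun k => u k j * v k j) @ \oo --> theta j.
  by move=> j; apply: cvgM.
have hpq : forall j, uinf j + vinf j != 0 /\ uinf j - vinf j != 0.
  move=> j; have := hD j; rewrite normr_eq0.
  have -> : uinf j ^+ 2 - vinf j ^+ 2 = (uinf j + vinf j) * (uinf j - vinf j) by ring.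
  by rewrite mulf_eq0 negb_or => /andP.
have hprev : forall (w : nat -> R) (l : R), w @ \oo --> l -> (fun k => w k.-1) @ \oo --> l.
  by move=> w l hw0; rewrite -cvg_shiftS.
have hnext : forall (w : nat -> R) (l : R), w @ \oo --> l -> (fun k => w k.+1) @ \oo --> l.
  by move=> w l hw0; have h := hw0; rewrite -cvg_shiftS in h.
have hg0 : forall j, (fun k => g k j) @ \oo --> 0.
  move=> j.
  have hgv : (fun k => gamma * g k j * v k j) @ \oo --> 0.
    apply: (@cvg_evt_eq _ _ (fun k => u k j - u k.+1 j + beta * (u k j - u k.-1 j)) _ 1).
      by move=> k hk; rewrite (hu k hk j) /g; ring.
    have := cvgD (cvgB (hcu j) (hnext _ _ (hcu j)))
      (cvgM (cvg_cst beta) (cvgB (hcu j) (hprev _ _ (hcu j)))).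
    rewrite !subrr mulr0 addr0; clrF; apply.
  have hgu : (fun k => gamma * g k j * u k j) @ \oo --> 0.
    apply: (@cvg_evt_eq _ _ (fun k => v k j - v k.+1 j + beta * (v k j - v k.-1 j)) _ 1).
      by move=> k hk; rewrite (hv k hk j) /g; ring.
    have := cvgD (cvgB (hcv j) (hnext _ _ (hcv j)))
      (cvgM (cvg_cst beta) (cvgB (hcv j) (hprev _ _ (hcv j)))).
    rewrite !subrr mulr0 addr0; clrF; apply.
  set L := gamma * (uinf j ^+ 2 + vinf j ^+ 2).
  have L0 : 0 < L.
    have [hp _] := hpq j.
    have : 0 < (uinf j + vinf j) ^+ 2 by rewrite exprn_even_gt0.
    rewrite /L => h; apply: mulr_gt0 => //; nra.
  have hden : (fun k => gamma * (u k j ^+ 2 + v k j ^+ 2)) @ \oo --> L.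
    apply: cvgM; first exact: cvg_cst.
    by apply: cvgD; rewrite expr2; apply: cvgM.
  have hnum : (fun k => gamma * g k j * v k j * v k j + gamma * g k j * u k j * u k j)
      @ \oo --> 0.
    have := cvgD (cvgM hgv (hcv j)) (cvgM hgu (hcu j)).
    rewrite !mul0r addr0; clrF; apply.
  have [N hN] := near_ex (cvgr_gt _ hden _ L0).
  apply: (@cvg_evt_eq _ _ (fun k => (gamma * g k j * v k j * v k j + gamma * g k j * u k j * u k j)
      / (gamma * (u k j ^+ 2 + v k j ^+ 2))) _ N).
    move=> k hk; have := hN k hk => hk0.
    have -> : gamma * g k j * v k j * v k j + gamma * g k j * u k j * u k j = g k j * (gamma * (u k j ^+ 2 + v k j ^+ 2)) by ring.
    by rewrite mulfK // lt0r_neq0.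
  have := cvgM hnum (cvgV (lt0r_neq0 L0) hden).
  rewrite mul0r; clrF; apply.
have hint : interpolators x y theta.
  exact: (interp B0 hs hb hth hg0).
split => //.
have hco : forall j, exists t : R * R * R,
  [/\ (fun K => (1 - beta)^-1 * \sum_(1 <= k < K) S_term beta (fun k => u k j + v k j) k)
        @ \oo --> t.1.1,
      (fun K => (1 - beta)^-1 * \sum_(1 <= k < K) S_term beta (fun k => u k j - v k j) k)
        @ \oo --> t.1.2,
      (fun K => \sum_(1 <= k < K.+1) gamma * g k j) @ \oo --> t.2,
      (1 - beta) * t.1.1 = - t.2 - (1 - beta) * (ln `|uinf j + vinf j| - ln `|u 0%N j + v 0%N j|) &
      (1 - beta) * t.1.2 = t.2 - (1 - beta) * (ln `|uinf j - vinf j| - ln `|u 0%N j - v 0%N j|)].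
  move=> j; have [hp hm] := hpq j.
  have [Sp [Sm [G [H1 H2 H3 H4 H5]]]] := @coord_main R beta (fun k => u k j + v k j)
     (fun k => u k j - v k j) (fun k => gamma * g k j) (uinf j + vinf j) (uinf j - vinf j)
     b0 b1 (fun k => (hw k j).1) (fun k => (hw k j).2) 
     ltac:(by rewrite /= hu1 hv1) ltac:(by rewrite /= hu1 hv1)
     ltac:(by move=> k hk /=; rewrite (hu k hk j) (hv k hk j) /g; ring)
     ltac:(by move=> k hk /=; rewrite (hu k hk j) (hv k hk j) /g; ring)
     ltac:(by apply: cvgD) ltac:(by apply: cvgB) hp hm.
  by exists (Sp, Sm, G); split.
have [F hF] := choice hco.
exists (fun j => (F j).1.1), (fun j => (F j).1.2).
split; first by move=> j; have [] := hF j.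
split; first by move=> j; have [] := hF j.
have b1' : 1 - beta != 0 by rewrite subr_eq0 eq_sym lt_eqF.
have hsum : forall j, (F j).1.1 + (F j).1.2 = - (ln `|uinf j + vinf j| - ln `|u 0%N j + v 0%N j|
     + (ln `|uinf j - vinf j| - ln `|u 0%N j - v 0%N j|)).
  move=> j; have [_ _ _ H4 H5] := hF j.
  apply: (mulfI b1'); rewrite mulrDr H4 H5; ring.
have hDinf : forall j, Dinf j = `|u 0%N j ^+ 2 - v 0%N j ^+ 2| * expR (- ((F j).1.1 + (F j).1.2)).
  move=> j; rewrite /Dinf.
  have e : forall a b : R, a ^+ 2 - b ^+ 2 = (a + b) * (a - b) by move=> a b; ring.
  rewrite !e !normrM; have [hp hm] := hpq j; have [h0p h0m] := hw 0%N j.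
  exact: Dinf_scalar hp hm h0p h0m (hsum j).
split; first exact: hDinf.
move=> th0 th hthS hne.
have Dpos : forall j, 0 < Dinf j by move=> j; rewrite /Dinf lt0r (hD j) normr_ge0.
set G := fun j => (F j).2.
have hGdiff : forall j, arcsinh (2 * th0 j / Dinf j)
    = arcsinh (2 * theta j / Dinf j) + 2 * (1 - beta)^-1 * G j.
  move=> j; have [_ _ _ H4 H5] := hF j.
  have [hp hm] := hpq j; have [h0p h0m] := hw 0%N j.
  have e : forall a b : R, a ^+ 2 - b ^+ 2 = (a + b) * (a - b) by move=> a b; ring.
  have hA : 0 < `|u 0%N j + v 0%N j| * expR (- (F j).1.1).
    by rewrite mulr_gt0 ?normr_gt0 ?expR_gt0.
  have hB : 0 < `|u 0%N j - v 0%N j| * expR (- (F j).1.2).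
    by rewrite mulr_gt0 ?normr_gt0 ?expR_gt0.
  have hD1 : Dinf j = (`|u 0%N j + v 0%N j| * expR (- (F j).1.1)) *
                      (`|u 0%N j - v 0%N j| * expR (- (F j).1.2)).
    rewrite hDinf e normrM opprD expRD; ring.
  have hD2 : Dinf j = `|uinf j + vinf j| * `|uinf j - vinf j|.
    by rewrite /Dinf e normrM.
  have -> : arcsinh (2 * th0 j / Dinf j) = ln (`|u 0%N j + v 0%N j| * expR (- (F j).1.1))
     - ln (`|u 0%N j - v 0%N j| * expR (- (F j).1.2)).
    by rewrite -arcsinh_ratio // /th0 th0_form hD1.
  have -> : arcsinh (2 * theta j / Dinf j) = ln `|uinf j + vinf j| - ln `|uinf j - vinf j|.
    by rewrite -arcsinh_ratio ?normr_gt0 // /theta (@theta_form _ (uinf j) (vinf j)) hD2.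
  rewrite !ln_AB //.
  have eSp : (F j).1.1 = - (1 - beta)^-1 * G j
      - (ln `|uinf j + vinf j| - ln `|u 0%N j + v 0%N j|).
    by apply: (mulfI b1'); rewrite H4 /G; field.
  have eSm : (F j).1.2 = (1 - beta)^-1 * G j
      - (ln `|uinf j - vinf j| - ln `|u 0%N j - v 0%N j|).
    by apply: (mulfI b1'); rewrite H5 /G; field.
  rewrite eSp eSm; ring.
have hG0 : \sum_(j < d) G j * (th j - theta j) = 0.
  have hl : (fun K => \sum_(j < d) (\sum_(1 <= k < K.+1) gamma * g k j) * (th j - theta j))
      @ \oo --> \sum_(j < d) G j * (th j - theta j).
    apply: (@cvg_sumI R d (fun j K => (\sum_(1 <= k < K.+1) gamma * g k j) * (th j - theta j))) => j.
    have [_ _ H3 _ _] := hF j.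
    by apply: cvgM => //; exact: cvg_cst.
  have hz : (fun K => \sum_(j < d) (\sum_(1 <= k < K.+1) gamma * g k j) * (th j - theta j))
      = (fun _ => 0).
    apply/funext => K.
    under eq_bigr => j _ do rewrite mulr_suml.
    rewrite exchange_big /= big1 // => k _.
    under eq_bigr => j _ do rewrite -mulrA.
    rewrite -mulr_sumr /g grad_dot // big1 ?mulr0 // => m _.
    by rewrite [dotv _ th]dotvC [dotv _ theta]dotvC hthS hint subrr mulr0.
  rewrite hz in hl.
  by rewrite -(cvg_lim _ hl) // lim_cst.
set psi := hyp_entropy Dinf.
have hgr : forall j, grad psi th0 j
    = 2^-1 * arcsinh (2 * theta j / Dinf j) + (1 - beta)^-1 * G j.
  by move=> j; rewrite /psi grad_hyp // hGdiff; field.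
have hdot : dotv (grad psi th0) (fun j => th j - th0 j)
    - dotv (grad psi th0) (fun j => theta j - th0 j)
    = \sum_(j < d) (2^-1 * arcsinh (2 * theta j / Dinf j)) * (th j - theta j).
  rewrite /dotv -sumrB.
  transitivity (\sum_(j < d) ((2^-1 * arcsinh (2 * theta j / Dinf j)) * (th j - theta j)
      + (1 - beta)^-1 * (G j * (th j - theta j)))).
    by apply: eq_bigr => j _; rewrite hgr; ring.
  by rewrite big_split /= -mulr_sumr hG0 mulr0 addr0.
set E := fun j => hterm (Dinf j) (th j) - hterm (Dinf j) (theta j)
    - 2 * arcsinh (2 * theta j / Dinf j) * (th j - theta j).
have hpsi : psi th - psi theta - \sum_(j < d) (2^-1 * arcsinh (2 * theta j / Dinf j)) * (th j - theta j)
    = 4^-1 * \sum_(j < d) E j.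
  rewrite /psi /hyp_entropy -mulrBr -sumrB mulr_sumr mulr_sumr -sumrB.
  apply: eq_bigr => j _; rewrite /E /hterm.
  move: (Num.sqrt (4 * th j ^+ 2 + Dinf j ^+ 2)) (Num.sqrt (4 * theta j ^+ 2 + Dinf j ^+ 2)) => s1 s2.
  move: (arcsinh (2 * th j / Dinf j)) (arcsinh (2 * theta j / Dinf j)) => a1 a2.
  by field.
have hE : forall j, 0 <= E j.
  move=> j; rewrite /E; have [->|hj] := eqVneq (th j) (theta j).
    by rewrite !subrr mulr0 subr0.
  exact: ltW (hterm_strict (Dpos j) hj).
have [j0 hj0] : exists j0, th j0 != theta j0.
  have : ~ (forall j, th j = theta j) by move=> h; apply: hne; apply/funext.
  by move/existsNP => [j0 hj0]; exists j0; apply/eqP.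
have hpos : 0 < \sum_(j < d) E j.
  rewrite (bigD1 j0) //=.
  have h1 := hterm_strict (Dpos j0) hj0.
  have h2 : 0 <= \sum_(j < d | j != j0) E j by apply: sumr_ge0 => j _; exact: hE.
  rewrite /E in h1 *; lra.
rewrite /bregman -/psi.
lra.
Qed.
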